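(* Let $p$ be an odd prime and $\mathbb O$ Zorn's split octonion algebra over $\mathbb Q_p$. The lattice $\Lambda[0,1,-1,0,-1,1,0,0]$, i.e. the set of $\begin{pmatrix}x&(y_1,y_2,y_3)\\ (z_1,z_2,z_3)&w\end{pmatrix}$ with $x,w,y_3,z_3\in\mathbb Z_p$, $y_1,z_2\in p\mathbb Z_p$, $y_2,z_1\in p^{-1}\mathbb Z_p$, is a maximal order in $\mathbb O$.
   Context: Zorn's split octonion algebra $\mathbb O$ over a field $k$ is the set of formal matrices $\begin{pmatrix}a&\vec v\\ \vec w&d\end{pmatrix}$ with $a,d\in k$, $\vec v,\vec w\in k^3$, with entrywise addition and multiplication $\begin{pmatrix}a&\vec v\\ \vec w&d\end{pmatrix}\begin{pmatrix}\alpha&\vec\phi\\ \vec\psi&\delta\end{pmatrix}=\begin{pmatrix}a\alpha+\vec v\cdot\vec\psi & a\vec\phi+\delta\vec v-\vec w\times\vec\psi\\ \alpha\vec w+d\vec\psi+\vec v\times\vec\phi & d\delta+\vec w\cdot\vec\phi\end{pmatrix}$ (standard dot and cross products). For integers $a_1,\dots,a_8$, $\Lambda[a_1,\dots,a_8]$ is the set of $\begin{pmatrix}x&(y_1,y_2,y_3)\\ (z_1,z_2,z_3)&w\end{pmatrix}$ with $x\in p^{a_1}\mathbb Z_p$, $y_i\in p^{a_{i+1}}\mathbb Z_p$, $z_i\in p^{a_{i+4}}\mathbb Z_p$, $w\in p^{a_8}\mathbb Z_p$. A lattice is a finitely generated $\mathbb Z_p$-submodule spanning $\mathbb O$ over $\mathbb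 Q_p$; an order is a lattice that contains $\mathbf 1$ and is closed under multiplication; a maximal order is an order not properly contained in any other order. *)

(* Defs.v *)
From HB Require Import structures.
From mathcomp Require Import all_boot all_order all_algebra.
Set Implicit Arguments. Unset Strict Implicit. Unset Printing Implicit Defensive.
Import Order.TTheory GRing.Theory Num.Theory.
Local Open Scope ring_scope.

Section Padic.
Variables (p : nat) (K : fieldType) (v : K -> int).

(* x lies in p^a Z_p  (0 has valuation +infinity) *)
Definition inpZ (a : int) (x : K) : Prop := x = 0 \/ a <= v x.

Definition padic_field : Prop :=
  [/\ (forall x y : K, x != 0 -> y != 0 -> v (x * y) = v x + v y),
      (forall x y : K, x != 0 -> y != 0 -> x + y != 0 ->
          Num.min (v x) (v y) <= v (x + y)),
      (p%:R : K) != 0 /\ v p%:R = 1,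
      (forall n : nat, (0 < n)%N -> (n%:R : K) != 0) /\
      (forall x : K, inpZ 0 x -> exists n : nat, inpZ 1 (x - n%:R)) &
      (forall u : nat -> K,
          (forall N : int, exists M : nat, forall m n : nat,
              (M <= m)%N -> (M <= n)%N -> inpZ N (u m - u n)) ->
          exists l : K, forall N : int, exists M : nat, forall m : nat,
              (M <= m)%N -> inpZ N (u m - l))].
End Padic.

(* Zorn's vector-matrix (split octonion) algebra over K *)
Record oct (K : Type) := Oct { oa : K; ov : K * K * K; ow : K * K * K; od : K }.

Section Octonions.
Variable K : fieldType.

Definition v3add (x y : K * K * K) : K * K * K :=
  let: (x1, x2, x3) := x in let: (y1, y2, y3) := y in (x1 + y1, x2 + y2, x3 + y3).
Definition v3scale (c : K) (x : K * K * K) : K * K * K :=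
  let: (x1, x2, x3) := x in (c * x1, c * x2, c * x3).
Definition v3dot (x y : K * K * K) : K :=
  let: (x1, x2, x3) := x in let: (y1, y2, y3) := y in x1 * y1 + x2 * y2 + x3 * y3.
Definition v3cross (x y : K * K * K) : K * K * K :=
  let: (x1, x2, x3) := x in let: (y1, y2, y3) := y in
  (x2 * y3 - x3 * y2, x3 * y1 - x1 * y3, x1 * y2 - x2 * y1).

Definition oct_add (X Y : oct K) : oct K :=
  Oct (oa X + oa Y) (v3add (ov X) (ov Y)) (v3add (ow X) (ow Y)) (od X + od Y).
Definition oct_scale (c : K) (X : oct K) : oct K :=
  Oct (c * oa X) (v3scale c (ov X)) (v3scale c (ow X)) (c * od X).
Definition oct0 : oct K := Oct 0 (0, 0, 0) (0, 0, 0) 0.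
Definition oct1 : oct K := Oct 1 (0, 0, 0) (0, 0, 0) 1.

Definition oct_mul (X Y : oct K) : oct K :=
  Oct (oa X * oa Y + v3dot (ov X) (ow Y))
      (v3add (v3add (v3scale (oa X) (ov Y)) (v3scale (od Y) (ov X)))
             (v3scale (-1) (v3cross (ow X) (ow Y))))
      (v3add (v3add (v3scale (oa Y) (ow X)) (v3scale (od X) (ow Y)))
             (v3cross (ov X) (ov Y)))
      (od X * od Y + v3dot (ow X) (ov Y)).

Fixpoint lincomb (cs : seq K) (gs : seq (oct K)) : oct K :=
  match cs, gs with
  | c :: cs', g :: gs' => oct_add (oct_scale c g) (lincomb cs' gs')
  | _, _ => oct0
  end.

Variable v : K -> int.

(* finitely generated Z_p-submodule spanning O over Q_p *)
Definition is_lattice (L : oct K -> Prop) : Prop :=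
  (exists gs : seq (oct K), forall x : oct K,
      L x <-> exists cs : seq K, size cs = size gs /\
              (forall c, c \in cs -> inpZ v 0 c) /\ x = lincomb cs gs) /\
  (forall x : oct K, exists (cs : seq K) (gs : seq (oct K)),
      (forall i : nat, (i < size gs)%N -> L (nth oct0 gs i)) /\ x = lincomb cs gs).

Definition is_order (L : oct K -> Prop) : Prop :=
  is_lattice L /\ L oct1 /\ (forall x y, L x -> L y -> L (oct_mul x y)).

Definition is_maximal_order (L : oct K -> Prop) : Prop :=
  is_order L /\
  (forall M : oct K -> Prop, is_order M -> (forall x, L x -> M x) ->
     forall x, M x -> L x).

Definition Lambda (a1 a2 a3 a4 a5 a6 a7 a8 : int) (X : oct K) : Prop :=
  let: (y1, y2, y3) := ov X in let: (z1, z2, z3) := ow X in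
  inpZ v a1 (oa X) /\ inpZ v a2 y1 /\ inpZ v a3 y2 /\ inpZ v a4 y3 /\
  inpZ v a5 z1 /\ inpZ v a6 z2 /\ inpZ v a7 z3 /\ inpZ v a8 (od X).
End Octonions.

(* Main.v *)
Require Import Defs.
From HB Require Import structures.
From mathcomp Require Import all_boot all_order all_algebra.
From mathcomp Require Import zify ring.
Import Order.TTheory GRing.Theory Num.Theory.
Set Implicit Arguments. Unset Strict Implicit.
Local Open Scope ring_scope.

Lemma pv1 p (K : fieldType) (v : K -> int) : padic_field p v -> v 1 = 0.
Proof.
case=> hm _ _ _ _; have := hm 1 1 (oner_neq0 _) (oner_neq0 _).
rewrite mulr1 => h; lia.
Qed.

Lemma pvm1 p (K : fieldType) (v : K -> int) : padic_field p v -> v (-1) = 0.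
Proof.
move=> hp; have h1 := pv1 hp; case: hp=> hm _ _ _ _.
have n1 : (-1 : K) != 0 by rewrite oppr_eq0 oner_neq0.
have := hm _ _ n1 n1; rewrite mulrNN mulr1 h1 => h; lia.
Qed.

Lemma inpZ_le (K : fieldType) (v : K -> int) a b x : b <= a -> inpZ v a x -> inpZ v b x.
Proof. move=> hb [->|h]; [by left|right; exact: le_trans h]. Qed.

Lemma inpZ_add p (K : fieldType) (v : K -> int) a x y : padic_field p v ->
  inpZ v a x -> inpZ v a y -> inpZ v a (x + y).
Proof.
case=> _ ha _ _ _ [->|hx]; first by rewrite add0r.
case=> [->|hy]; first by rewrite addr0; right.
have [->|x0] := eqVneq x 0; first by rewrite add0r; right.
have [->|y0] := eqVneq y 0; first by rewrite addr0; right.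
have [->|s0] := eqVneq (x + y) 0; first by left.
right; apply: le_trans (ha _ _ x0 y0 s0); by rewrite le_min hx hy.
Qed.

Lemma inpZ_mulW p (K : fieldType) (v : K -> int) a b c x y : padic_field p v ->
  inpZ v a x -> inpZ v b y -> c <= a + b -> inpZ v c (x * y).
Proof.
case=> hm _ _ _ _ [->|hx]; first by rewrite mul0r; left.
case=> [->|hy]; first by rewrite mulr0; left.
move=> hc.
have [->|x0] := eqVneq x 0; first by rewrite mul0r; left.
have [->|y0] := eqVneq y 0; first by rewrite mulr0; left.
right; rewrite hm //; lia.
Qed.

Lemma inpZ_opp p (K : fieldType) (v : K -> int) a x : padic_field p v ->
  inpZ v a x -> inpZ v a (- x).
Proof.
move=> hp hx; rewrite -mulN1r; apply: (inpZ_mulW (a:=0) hp) hx _.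
  by right; rewrite (pvm1 hp).
by rewrite add0r.
Qed.


Ltac inpz hp :=
  match goal with
  | |- inpZ _ _ (_ + _) => apply: (inpZ_add hp); inpz hp
  | |- inpZ _ _ (- _) => apply: (inpZ_opp hp); inpz hp
  | |- inpZ _ _ (-1 * _) => apply: (inpZ_opp hp); rewrite mul1r; inpz hp
  | |- inpZ _ _ (_ * _) => apply: (inpZ_mulW hp); [eassumption|eassumption|done]
  | _ => eassumption
  end.

Lemma Lmul p (K : fieldType) (v : K -> int) X Y : padic_field p v ->
  Lambda v 0 1 (-1) 0 (-1) 1 0 0 X -> Lambda v 0 1 (-1) 0 (-1) 1 0 0 Y ->
  Lambda v 0 1 (-1) 0 (-1) 1 0 0 (oct_mul X Y).
Proof.
move=> hp.
case: X => a [[y1 y2] y3] [[z1 z2] z3] d.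
case: Y => a' [[y1' y2'] y3'] [[z1' z2'] z3'] d'.
rewrite /Lambda /=.
move=> [h1 [h2 [h3 [h4 [h5 [h6 [h7 h8]]]]]]].
move=> [k1 [k2 [k3 [k4 [k5 [k6 [k7 k8]]]]]]].
rewrite !mulN1r.
by do !split; inpz hp.
Qed.


Definition gens (K : fieldType) (q : K) : seq (oct K) :=
  [:: Oct 1 (0,0,0) (0,0,0) 0; Oct 0 (q,0,0) (0,0,0) 0; Oct 0 (0,q^-1,0) (0,0,0) 0;
      Oct 0 (0,0,1) (0,0,0) 0; Oct 0 (0,0,0) (q^-1,0,0) 0; Oct 0 (0,0,0) (0,q,0) 0;
      Oct 0 (0,0,0) (0,0,1) 0; Oct 0 (0,0,0) (0,0,0) 1].

Definition pr (K : fieldType) (i : nat) (X : oct K) : K :=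
  match i with 0 => oa X | 1 => (ov X).1.1 | 2 => (ov X).1.2 | 3 => (ov X).2
  | 4 => (ow X).1.1 | 5 => (ow X).1.2 | 6 => (ow X).2 | _ => od X end.

Lemma pr_add (K : fieldType) i (X Y : oct K) : pr i (oct_add X Y) = pr i X + pr i Y.
Proof.
case: X => a [[? ?] ?] [[? ?] ?] ?; case: Y => a' [[? ?] ?] [[? ?] ?] ?.
by case: i => [|[|[|[|[|[|[|]]]]]]].
Qed.
Lemma pr_scale (K : fieldType) i c (X : oct K) : pr i (oct_scale c X) = c * pr i X.
Proof.
case: X => a [[? ?] ?] [[? ?] ?] ?.
by case: i => [|[|[|[|[|[|[|]]]]]]].
Qed.
Lemma pr0 (K : fieldType) i : pr i (oct0 K) = 0.
Proof. by case: i => [|[|[|[|[|[|[|]]]]]]]. Qed.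
Lemma pr_lincomb (K : fieldType) i c cs g gs :
  pr i (lincomb (c :: cs) (g :: gs)) = c * pr i g + pr i (lincomb cs gs) :> K.
Proof. by rewrite /= pr_add pr_scale. Qed.
Lemma oct_ext (K : fieldType) (X Y : oct K) :
  (forall i, (i < 8)%N -> pr i X = pr i Y) -> X = Y.
Proof.
case: X => a [[x1 x2] x3] [[y1 y2] y3] d; case: Y => a' [[x1' x2'] x3'] [[y1' y2'] y3'] d' h.
have := h 0%N; have := h 1%N; have := h 2%N; have := h 3%N; have := h 4%N; have := h 5%N; have := h 6%N; have := h 7%N.
by rewrite /= => -> // -> // -> // -> // -> // -> // -> // -> //.
Qed.

Lemma lincomb_gens (K : fieldType) (q : K) c1 c2 c3 c4 c5 c6 c7 c8 :
  lincomb [:: c1; c2; c3; c4; c5; c6; c7; c8] (gens q) =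
  Oct c1 (c2 * q, c3 * q^-1, c4) (c5 * q^-1, c6 * q, c7) c8.
Proof.
apply: oct_ext => i hi; rewrite /gens !pr_lincomb /= pr0.
by case: i hi => [|[|[|[|[|[|[|[|]]]]]]]] //= _; rewrite !(mulr0, mulr1, addr0, add0r).
Qed.

Lemma pvq p (K : fieldType) (v : K -> int) : padic_field p v ->
  (p%:R : K) != 0 /\ v p%:R = 1 /\ v (p%:R^-1) = -1.
Proof.
move=> hp; have h1 := pv1 hp; case: hp => hm _ [q0 vq] _ _.
have qi0 : (p%:R : K)^-1 != 0 by rewrite invr_eq0.
have := hm _ _ q0 qi0; rewrite mulfV // h1 vq => h.
split=> //; split=> //; rewrite -[LHS](addKr 1) -h addr0; reflexivity.
Qed.

Lemma in_consP (T : eqType) (P : T -> Prop) x s :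
  P x -> (forall c, c \in s -> P c) -> forall c, c \in x :: s -> P c.
Proof. by move=> hx hs c; rewrite inE => /orP [/eqP -> | /hs]. Qed.

Lemma in_nilP (T : eqType) (P : T -> Prop) : forall c, c \in [::] -> P c.
Proof. by move=> c; rewrite in_nil. Qed.

Lemma Llattice p (K : fieldType) (v : K -> int) : padic_field p v ->
  is_lattice v (Lambda v 0 1 (-1) 0 (-1) 1 0 0).
Proof.
move=> hp; have h1 := pv1 hp; have [q0 [vq vqi]] := pvq hp.
set q := (p%:R : K).
have qi0 : q^-1 != 0 by rewrite invr_eq0.
have u1 : inpZ v 0 1 by right; rewrite h1.
have uq : inpZ v 1 q by right; rewrite vq.
have uqi : inpZ v (-1) q^-1 by right; rewrite vqi.
have u0 : forall a, inpZ v a (0 : K) by left.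
split.
  exists (gens q) => X; split.
    case: X => a [[y1 y2] y3] [[z1 z2] z3] d.
    rewrite /Lambda /= => [[h1' [h2 [h3 [h4 [h5 [h6 [h7 h8]]]]]]]].
    exists [:: a; y1 * q^-1; y2 * q; y3; z1 * q; z2 * q^-1; z3; d].
    split=> //; split.
      do 8 (apply: in_consP; first by inpz hp).
      exact: in_nilP.
    by rewrite lincomb_gens !mulfVK // !mulfK.
  case=> cs [hs [hc ->]].
  case: cs hs hc => [|c1 [|c2 [|c3 [|c4 [|c5 [|c6 [|c7 [|c8 [|]]]]]]]]] // _ hc.
  have k1 : inpZ v 0 c1 by apply: hc; rewrite !inE eqxx ?orbT.
  have k2 : inpZ v 0 c2 by apply: hc; rewrite !inE eqxx ?orbT.
  have k3 : inpZ v 0 c3 by apply: hc; rewrite !inE eqxx ?orbT.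
  have k4 : inpZ v 0 c4 by apply: hc; rewrite !inE eqxx ?orbT.
  have k5 : inpZ v 0 c5 by apply: hc; rewrite !inE eqxx ?orbT.
  have k6 : inpZ v 0 c6 by apply: hc; rewrite !inE eqxx ?orbT.
  have k7 : inpZ v 0 c7 by apply: hc; rewrite !inE eqxx ?orbT.
  have k8 : inpZ v 0 c8 by apply: hc; rewrite !inE eqxx ?orbT.
  rewrite lincomb_gens /Lambda /=.
  by do !split; inpz hp.
case=> a [[y1 y2] y3] [[z1 z2] z3] d.
exists [:: a; y1 * q^-1; y2 * q; y3; z1 * q; z2 * q^-1; z3; d], (gens q); split.
  move=> i hi.
  by case: i hi => [|[|[|[|[|[|[|[|]]]]]]]] //= _; do !split.
by rewrite lincomb_gens !mulfVK // !mulfK.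
Qed.


Definition E1 (K : fieldType) (c : K) := Oct c (0,0,0) (0,0,0) 0.
Definition E2 (K : fieldType) (c : K) := Oct 0 (0,0,0) (0,0,0) c.

Ltac octring := apply: oct_ext; case=> [|[|[|[|[|[|[|[|]]]]]]]] //= _; ring.

Lemma prodA (K : fieldType) a y1 y2 y3 z1 z2 z3 (d : K) :
  oct_mul (oct_mul (E1 1) (Oct a (y1,y2,y3) (z1,z2,z3) d)) (E1 1) = E1 a.
Proof. octring. Qed.
Lemma prodD (K : fieldType) a y1 y2 y3 z1 z2 z3 (d : K) :
  oct_mul (oct_mul (E2 1) (Oct a (y1,y2,y3) (z1,z2,z3) d)) (E2 1) = E2 d.
Proof. octring. Qed.
Lemma prodY (K : fieldType) a y1 y2 y3 z1 z2 z3 (d : K) c1 c2 c3 :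
  oct_mul (oct_mul (oct_mul (E1 1) (Oct a (y1,y2,y3) (z1,z2,z3) d)) (E2 1))
          (Oct 0 (0,0,0) (c1,c2,c3) 0) = E1 (y1*c1 + y2*c2 + y3*c3).
Proof. octring. Qed.
Lemma prodZ (K : fieldType) a y1 y2 y3 z1 z2 z3 (d : K) c1 c2 c3 :
  oct_mul (oct_mul (oct_mul (E2 1) (Oct a (y1,y2,y3) (z1,z2,z3) d)) (E1 1))
          (Oct 0 (c1,c2,c3) (0,0,0) 0) = E2 (z1*c1 + z2*c2 + z3*c3).
Proof. octring. Qed.
Lemma prodE1 (K : fieldType) (c c' : K) : oct_mul (E1 c) (E1 c') = E1 (c * c').
Proof. octring. Qed.
Lemma prodE2 (K : fieldType) (c c' : K) : oct_mul (E2 c) (E2 c') = E2 (c * c').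
Proof. octring. Qed.

Lemma lincomb_bound p (K : fieldType) (v : K -> int) i (gs : seq (oct K)) :
  padic_field p v -> exists B, forall cs, (forall c, c \in cs -> inpZ v 0 c) ->
    inpZ v B (pr i (lincomb cs gs)).
Proof.
move=> hp; elim: gs => [|g gs [B IH]].
  by exists 0 => -[|c cs] _; rewrite /= pr0; left.
exists (Num.min B (v (pr i g))) => -[|c cs] hc.
  by rewrite /= pr0; left.
rewrite pr_lincomb; apply: (inpZ_add hp).
  apply: (inpZ_mulW (a:=0) (b:= v (pr i g)) hp).
  - by apply: hc; rewrite inE eqxx.
  - by right.
  - by rewrite add0r ge_min lexx orbT.
apply: (inpZ_le (a:=B)); first by rewrite ge_min lexx.
by apply: IH => c' hc'; apply: hc; rewrite inE hc' orbT.
Qed.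

Lemma v_exp p (K : fieldType) (v : K -> int) (c : K) n : padic_field p v ->
  c != 0 -> v (c ^+ n) = v c *+ n.
Proof.
move=> hp c0; have h1 := pv1 hp; case: hp => hm _ _ _ _.
elim: n => [|n IH]; first by rewrite expr0 h1.
by rewrite exprS hm ?expf_neq0 // IH mulrS.
Qed.

Lemma scalar_int p (K : fieldType) (v : K -> int) (M : oct K -> Prop) (F : K -> oct K) i c :
  padic_field p v -> is_order v M ->
  (forall x y, oct_mul (F x) (F y) = F (x * y)) -> (forall x, pr i (F x) = x) ->
  M (F c) -> inpZ v 0 c.
Proof.
move=> hp [[[gs hgs] _] [_ hmul]] hF hpr hc.
have [B hB] := lincomb_bound i gs hp.
have pw : forall n, M (F (c ^+ n.+1)).
  elim=> [|n IH]; first by rewrite expr1.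
  by rewrite exprS -hF; apply: (hmul).
have bd : forall n, inpZ v B (c ^+ n.+1).
  move=> n; rewrite -[X in inpZ _ _ X]hpr.
  have /hgs [cs [_ [hcs ->]]] := pw n.
  exact: hB.
have [->|c0] := eqVneq c 0; first by left.
right; rewrite leNgt; apply/negP => hneg.
have := bd `|B|%N; case=> [/eqP|].
  by rewrite expf_eq0 (negPf c0) andbF.
rewrite (v_exp _ hp c0) -mulr_natr => hB'.
nia.
Qed.

Lemma unscale p (K : fieldType) (v : K -> int) (x c : K) : padic_field p v ->
  c != 0 -> inpZ v 0 (x * c) -> inpZ v (- v c) x.
Proof.
move=> hp c0; case: (hp) => hm _ _ _ _ [/eqP|h].
  by rewrite mulf_eq0 (negPf c0) orbF => /eqP ->; left.
have [->|x0] := eqVneq x 0; first by left.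
by right; move: h; rewrite hm //; lia.
Qed.

Theorem mainTheorem14 (p : nat) (K : fieldType) (v : K -> int) :
  prime p -> odd p -> padic_field p v ->
  is_maximal_order v (Lambda v 0 1 (-1) 0 (-1) 1 0 0).
Proof.
move=> _ _ hp.
have h1 := pv1 hp; have [q0 [vq vqi]] := pvq hp.
set q := (p%:R : K).
have qi0 : q^-1 != 0 by rewrite invr_eq0.
have o10 : (1 : K) != 0 := oner_neq0 _.
have hord : is_order v (Lambda v 0 1 (-1) 0 (-1) 1 0 0).
  rewrite /is_order; split; first exact: (Llattice hp).
  split; last by move=> x y; apply: (Lmul hp).
  by rewrite /Lambda /=; do !split; try (by left); right; rewrite h1.
split=> // M hM hLM X hX.
have hmul := hM.2.2.
have LE1 : M (E1 1) by apply: (hLM); rewrite /Lambda /=; do !split; try (by left); right; rewrite h1.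
have LE2 : M (E2 1) by apply: (hLM); rewrite /Lambda /=; do !split; try (by left); right; rewrite h1.
have s1 : forall c, M (E1 c) -> inpZ v 0 c.
  by move=> c; apply: (scalar_int (i:=0) hp hM) => //; exact: prodE1.
have s2 : forall c, M (E2 c) -> inpZ v 0 c.
  by move=> c; apply: (scalar_int (i:=7) hp hM) => //; exact: prodE2.
have LW : forall c1 c2 c3, Lambda v 0 1 (-1) 0 (-1) 1 0 0 (Oct 0 (0,0,0) (c1,c2,c3) 0) ->
   forall a y1 y2 y3 z1 z2 z3 d, M (Oct a (y1,y2,y3) (z1,z2,z3) d) ->
   M (E1 (y1*c1 + y2*c2 + y3*c3)).
  move=> c1 c2 c3 hc a y1 y2 y3 z1 z2 z3 d hx; rewrite -(prodY a _ _ _ z1 z2 z3 d).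
  apply: (hmul); last exact: (hLM).
  by apply: (hmul) => //; apply: (hmul).
have LV : forall c1 c2 c3, Lambda v 0 1 (-1) 0 (-1) 1 0 0 (Oct 0 (c1,c2,c3) (0,0,0) 0) ->
   forall a y1 y2 y3 z1 z2 z3 d, M (Oct a (y1,y2,y3) (z1,z2,z3) d) ->
   M (E2 (z1*c1 + z2*c2 + z3*c3)).
  move=> c1 c2 c3 hc a y1 y2 y3 z1 z2 z3 d hx; rewrite -(prodZ a y1 y2 y3 _ _ _ d).
  apply: (hmul); last exact: (hLM).
  by apply: (hmul) => //; apply: (hmul).
have u1 : inpZ v 0 1 by right; rewrite h1.
have uq : inpZ v 1 q by right; rewrite vq.
have uqi : inpZ v (-1) q^-1 by right; rewrite vqi.
have u0 : forall a, inpZ v a (0 : K) by left.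
case: X hX => a [[y1 y2] y3] [[z1 z2] z3] d hX.
rewrite /Lambda /=.
have ha : inpZ v 0 a.
  by apply: s1; rewrite -(prodA a y1 y2 y3 z1 z2 z3 d); apply: (hmul) => //; apply: (hmul).
have hd : inpZ v 0 d.
  by apply: s2; rewrite -(prodD a y1 y2 y3 z1 z2 z3 d); apply: (hmul) => //; apply: (hmul).
have hy1 : inpZ v 0 (y1*q^-1 + y2*0 + y3*0).
  apply: s1; apply: (LW q^-1 0 0 _ a y1 y2 y3 z1 z2 z3 d hX); by rewrite /Lambda /=; do !split.
have hy2 : inpZ v 0 (y1*0 + y2*q + y3*0).
  apply: s1; apply: (LW 0 q 0 _ a y1 y2 y3 z1 z2 z3 d hX); by rewrite /Lambda /=; do !split.
have hy3 : inpZ v 0 (y1*0 + y2*0 + y3*1).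
  apply: s1; apply: (LW 0 0 1 _ a y1 y2 y3 z1 z2 z3 d hX); by rewrite /Lambda /=; do !split.
have hz1 : inpZ v 0 (z1*q + z2*0 + z3*0).
  apply: s2; apply: (LV q 0 0 _ a y1 y2 y3 z1 z2 z3 d hX); by rewrite /Lambda /=; do !split.
have hz2 : inpZ v 0 (z1*0 + z2*q^-1 + z3*0).
  apply: s2; apply: (LV 0 q^-1 0 _ a y1 y2 y3 z1 z2 z3 d hX); by rewrite /Lambda /=; do !split.
have hz3 : inpZ v 0 (z1*0 + z2*0 + z3*1).
  apply: s2; apply: (LV 0 0 1 _ a y1 y2 y3 z1 z2 z3 d hX); by rewrite /Lambda /=; do !split.
rewrite !(mulr0, addr0, add0r) in hy1 hy2 hy3 hz1 hz2 hz3.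
move: hy1 hy2 hy3 hz1 hz2 hz3.
move=> /(unscale hp qi0) hy1 /(unscale hp q0) hy2 /(unscale hp o10) hy3.
move=> /(unscale hp q0) hz1 /(unscale hp qi0) hz2 /(unscale hp o10) hz3.
rewrite vqi vq h1 in hy1 hy2 hy3 hz1 hz2 hz3.
by do !split.
Qed.
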